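(* Let $A$ be a commutative Noetherian regular ring of prime characteristic $p$, let $e\geq 1$, and let $y_1,\ldots,y_n$ be an $A$-Koszul regular sequence, $I_n=\langle y_1,\ldots,y_n\rangle$. Then the Frobenius–Koszul complex $\mathcal{FK}_\bullet(y_1,\ldots,y_n;A)$ is a finite free resolution of $A/I_n$ in the category of left $A[\Theta;F^e]$-modules.
   Context: $F:A\to A$ is the Frobenius map $a\mapsto a^p$ and $F^e$ its $e$-th iterate. The left skew polynomial ring $A[\Theta;F^e]$ is the ring which is a free left $A$-module with basis $\{\Theta^i\}_{i\geq0}$ and multiplication determined by $\Theta a=a^{p^e}\Theta$. A sequence $y_1,\dots,y_n$ in $A$ is Koszul regular if the Koszul complex $K_\bullet(y_1,\ldots,y_n;A)$ has homology only in degree $0$. For $J=\{j_1<\cdots<j_k\}\subseteq\{1,\dots,n\}$ put $\mathbf{e}_J=\mathbf{e}_{j_1}\wedge\cdots\wedge\mathbf{e}_{j_k}$ and $y_J^{p^e-1}=y_{j_1}^{p^e-1}\cdots y_{j_k}^{p^e-1}$ (equal to $1$ if $J=\emptyset$). The Frobenius–Koszul complex $\mathcal{FK}_\bullet(y_1,\ldots,y_n;A)$ has, for $0\le l\le n+1$, $\mathcal{FK}_l$ the free left $A[\Theta;F^e]$-module with basis $\{\mathbf{e}_I:|I|=l\}\cup\{\mathbf{e}_J\wedge u:|J|=l-1\}$, and left $A[\Theta;F^e]$-linear differentials $\partial_l(\mathbf{e}_I)=\sum_{r=1}^l(-1)^{r-1}y_{i_r}\mathbf{e}_{I\setminus\{i_r\}}$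 for $I=\{i_1<\dots<i_l\}$ and $\partial_l(\mathbf{e}_J\wedge u)=(-1)^{l-1}(\Theta-y_J^{p^e-1})\mathbf{e}_J+\sum_{r=1}^{l-1}(-1)^{r-1}y_{j_r}^{p^e}\mathbf{e}_{J\setminus\{j_r\}}\wedge u$ for $J=\{j_1<\dots<j_{l-1}\}$. $A/I_n$ is a left $A[\Theta;F^e]$-module with $\Theta$ acting by $\bar a\mapsto \overline{a^{p^e}}$. *)

(* Defs.v *)
From HB Require Import structures.
From mathcomp Require Import all_boot all_order all_algebra.
Set Implicit Arguments. Unset Strict Implicit. Unset Printing Implicit Defensive.
Import Order.TTheory GRing.Theory Num.Theory.
Local Open Scope ring_scope.

Section CommAlg.
Variable A : comNzRingType.

Definition in_gen (m : nat) (x : 'I_m -> A) (a : A) : Prop :=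
  exists c : 'I_m -> A, a = \sum_(i < m) c i * x i.

Definition is_ideal (S : A -> Prop) : Prop :=
  [/\ S 0, (forall a b, S a -> S b -> S (a + b)) & (forall r a, S a -> S (r * a))].

Definition noetherian : Prop :=
  forall S : A -> Prop, is_ideal S ->
    exists m (x : 'I_m -> A), forall a, S a <-> in_gen x a.

Definition is_prime_ideal (P : A -> Prop) : Prop :=
  [/\ is_ideal P, ~ P 1 & (forall a b, P (a * b) -> P a \/ P b)].

Definition prime_chain_to (P : A -> Prop) (h : nat) : Prop :=
  exists c : nat -> A -> Prop,
    [/\ (forall i, (i <= h)%N -> is_prime_ideal (c i)),
        (forall a, c h a <-> P a) &
        (forall i, (i < h)%N ->
           (forall a, c i a -> c i.+1 a) /\ exists a, c i.+1 a /\ ~ c i a)].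

(* the maximal ideal P A_P of the localization A_P is generated by m elements
   (written without localization: x_i/1 generate P A_P iff some s ∉ P
   satisfies s P ⊆ (x_1,...,x_m)) *)
Definition loc_gen (P : A -> Prop) (m : nat) : Prop :=
  exists x : 'I_m -> A, (forall i, P (x i)) /\
    exists s, ~ P s /\ forall a, P a -> in_gen x (s * a).

(* A is regular: for every prime P, A_P is a regular local ring, i.e.
   dim A_P (= height P) equals the minimal number of generators of P A_P *)
Definition regular_ring : Prop :=
  forall P : A -> Prop, is_prime_ideal P ->
    exists h, [/\ prime_chain_to P h, ~ prime_chain_to P h.+1,
                  loc_gen P h & forall m, (m < h)%N -> ~ loc_gen P m].

Variable n : nat.
Variable y : 'I_n -> A.

Definition ksgn (I : {set 'I_n}) (i : 'I_n) : A :=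
  (-1) ^+ #|[set k in I | (k < i)%N]|.

Definition kvec := {ffun {set 'I_n} -> A}.

Definition ksingle (J : {set 'I_n}) (c : A) : kvec :=
  [ffun K => if K == J then c else 0].

Definition kbd (I : {set 'I_n}) : kvec :=
  \sum_(i in I) ksingle (I :\ i) (ksgn I i * y i).

Definition kd (f : kvec) : kvec :=
  \sum_(I : {set 'I_n}) [ffun K => f I * kbd I K].

Definition khom (l : nat) (f : kvec) : Prop :=
  forall I : {set 'I_n}, #|I| != l -> f I = 0.

Definition koszul_regular : Prop :=
  forall (l : nat) (f : kvec), (0 < l)%N -> khom l f -> kd f = 0 ->
    exists g, khom l.+1 g /\ kd g = f.

(* An element sum_i a_i Θ^i is represented by the polynomial sum_i a_i X^i
   (coefficients on the left); multiplication uses Θ^i b = b^(p^(e i)) Θ^i. *)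
Variables (p e : nat).

Definition skmul (f g : {poly A}) : {poly A} :=
  \poly_(k < size f + size g)
     \sum_(i < k.+1) f`_i * (g`_(k - i)) ^+ (p ^ (e * i)).

(* All FK_l together: basis element (I,false) is e_I (degree |I|),
   (J,true) is e_J ∧ u (degree |J|+1).  An element is its coefficient
   function with values in A[Θ;F^e]. *)
Definition fkvec := {ffun {set 'I_n} * bool -> {poly A}}.

Definition fsingle (z0 : {set 'I_n} * bool) (c : {poly A}) : fkvec :=
  [ffun z => if z == z0 then c else 0].

Definition fkdeg (z : {set 'I_n} * bool) : nat := (#|z.1| + z.2)%N.

Definition fkhom (l : nat) (f : fkvec) : Prop :=
  forall z, fkdeg z != l -> f z = 0.

Definition yJ (J : {set 'I_n}) : A := \prod_(j in J) y j ^+ (p ^ e - 1).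

Definition fkbd (z : {set 'I_n} * bool) : fkvec :=
  let I := z.1 in
  if ~~ z.2 then \sum_(i in I) fsingle (I :\ i, false) (ksgn I i * y i)%:P
  else fsingle (I, false) (((-1) ^+ #|I|)%:P * ('X - (yJ I)%:P))
       + \sum_(j in I) fsingle (I :\ j, true) (ksgn I j * y j ^+ (p ^ e))%:P.

Definition fkd (f : fkvec) : fkvec :=
  \sum_(z : {set 'I_n} * bool) [ffun w => skmul (f z) (fkbd z w)].

(* augmentation FK_0 = A[Θ;F^e] -> A/I_n, r ↦ r·1̄ ; Σ a_i Θ^i ↦ class of Σ a_i *)
Definition fkaug (f : fkvec) : A :=
  let q := f (set0, false) in \sum_(i < size q) q`_i.

End CommAlg.

(* Main.v *)
Require Import Defs.
From HB Require Import structures.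
From mathcomp Require Import all_boot all_order all_algebra.
From mathcomp Require Import ring.
From mathcomp Require Import zify.
From Stdlib Require Import ClassicalEpsilon.
Set Implicit Arguments. Unset Strict Implicit. Unset Printing Implicit Defensive.
Import GRing.Theory.
Local Open Scope ring_scope.

Section K1.
Variables (A : comNzRingType) (n : nat).
Implicit Types (z : 'I_n -> A) (f g : kvec A n) (I K : {set 'I_n}).

Lemma ksgnU (x : 'I_n) I (i : 'I_n) : x \notin I ->
  ksgn A (x |: I) i = (if (x < i)%N then -1 else 1) * ksgn A I i.
Proof.
move=> xI; rewrite /ksgn.
have -> : [set k in x |: I | (k < i)%N] =
  (if (x < i)%N then x |: [set k in I | (k < i)%N] else [set k in I | (k < i)%N]).
  apply/setP=> k; rewrite !inE; case: ifP => xi; rewrite ?inE;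
  case: (eqVneq k x) => [->|] //=; rewrite ?xi ?(negbTE xI) //= ?andbF //.
case: ifP => _; last by rewrite mul1r.
by rewrite cardsU1 inE (negbTE xI) /= exprS.
Qed.

Lemma ksgn_sq I i : ksgn A I i * ksgn A I i = 1.
Proof. by rewrite /ksgn -exprD -signr_odd oddD addbb. Qed.

Lemma ksgnU1 (i : 'I_n) I : ksgn A (i |: I) i = ksgn A I i.
Proof.
rewrite /ksgn; congr (_ ^+ _); apply: eq_card => k; rewrite !inE.
by case: (eqVneq k i) => [->|] /=; rewrite ?ltnn ?andbF // ?orbF ?andbT.
Qed.

Lemma kdE z f K : kd z f K = \sum_(I : {set 'I_n}) f I * kbd z I K.
Proof. by rewrite /kd sum_ffunE; apply: eq_bigr => I _; rewrite ffunE. Qed.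

Lemma kbdE z I K : kbd z I K =
  \sum_(i in I) (if K == I :\ i then ksgn A I i * z i else 0).
Proof. by rewrite /kbd sum_ffunE; apply: eq_bigr => i _; rewrite ffunE. Qed.

Lemma kdE2 z f K : kd z f K =
  \sum_(i | i \notin K) f (i |: K) * (ksgn A (i |: K) i * z i).
Proof.
rewrite kdE.
under eq_bigr do rewrite kbdE big_distrr /=.
rewrite (exchange_big_dep predT) //=.
rewrite [LHS](bigID (fun i => i \notin K)) /= [X in _ + X]big1 ?addr0; last first.
  move=> i; rewrite negbK => iK.
  apply: big1 => I iI; case: eqP => [KE|]; last by rewrite mulr0.
  by move: iK; rewrite KE setD11.
apply: eq_bigr => i iK.
rewrite (bigD1 (i |: K)) ?setU11 //= big1 ?addr0.
  by rewrite setU1K // eqxx.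
move=> I /andP[iI IiK]; case: eqP => [KE|]; last by rewrite mulr0.
by case/eqP: IiK; rewrite KE setD1K.
Qed.

Lemma kdD z f g : kd z (f + g) = kd z f + kd z g.
Proof.
apply/ffunP=> K; rewrite ffunE !kdE -big_split; apply: eq_bigr => I _.
by rewrite ffunE mulrDl.
Qed.

Definition scl c f : kvec A n := [ffun I => c * f I].

Lemma kdZ z c f : kd z (scl c f) = scl c (kd z f).
Proof.
apply/ffunP=> K; rewrite ffunE !kdE mulr_sumr; apply: eq_bigr => I _.
by rewrite ffunE mulrA.
Qed.

Lemma kd0 z : kd z 0 = 0.
Proof. by apply/ffunP=> K; rewrite kdE ffunE big1 // => I _; rewrite ffunE mul0r. Qed.

Lemma kdN z f : kd z (- f) = - kd z f.
Proof. by apply/eqP; rewrite -subr_eq0 opprK -kdD addNr kd0. Qed.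

Lemma kdB z f g : kd z (f - g) = kd z f - kd z g.
Proof. by rewrite kdD kdN. Qed.

Lemma kd_ext z z' f : (forall i, z i = z' i) -> kd z f = kd z' f.
Proof.
move=> E; apply/ffunP=> K; rewrite !kdE2; apply: eq_bigr => i _; by rewrite E.
Qed.

Lemma kd_hom z l f : khom l.+1 f -> khom l (kd z f).
Proof.
move=> H K Kl; rewrite kdE2 big1 // => i iK.
by rewrite H ?mul0r // cardsU1 iK.
Qed.

Lemma kd_hom0 z f : khom 0 f -> kd z f = 0.
Proof.
move=> H; apply/ffunP=> K; rewrite ffunE kdE2 big1 // => i iK.
by rewrite H ?mul0r // cardsU1 iK.
Qed.

Lemma kdd z f : kd z (kd z f) = 0.
Proof.
apply/ffunP=> K; rewrite ffunE kdE2.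
pose F (i j : 'I_n) := if (i \notin K) && (j \notin K) && (i != j) then
   f (j |: (i |: K)) * (ksgn A (j |: (i |: K)) j * z j) * (ksgn A (i |: K) i * z i)
   else 0.
transitivity (\sum_i \sum_j F i j).
  rewrite [RHS](bigID (fun i => i \notin K)) /= [X in _ = _ + X]big1 ?addr0; last first.
    by move=> i iK; apply: big1 => j _; rewrite /F (negbTE iK).
  apply: eq_bigr => i iK; rewrite kdE2 mulr_suml.
  rewrite [RHS](bigID (fun j => j \notin i |: K)) /= [X in _ = _ + X]big1 ?addr0; last first.
    move=> j; rewrite negbK => jiK; rewrite /F.
    by move: jiK; rewrite !inE; case/orP=> [/eqP->|->]; rewrite ?eqxx ?andbF ?andbT.
  apply: eq_bigr => j; rewrite /F !inE negb_or iK /= => /andP[ji jK].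
  by rewrite jK eq_sym ji.
have Fii i : F i i = 0 by rewrite /F eqxx andbF.
have Fa i j : F i j + F j i = 0.
  case: (eqVneq i j) => [->|ij]; first by rewrite Fii addr0.
  rewrite /F ij (eq_sym j i) ij /=.
  case iK: (i \in K); rewrite ?andbF /= ?add0r ?addr0 //.
  case jK: (j \in K); rewrite ?andbF /= ?add0r ?addr0 //.
  rewrite setUCA !ksgnU1 !ksgnU; try by rewrite ?inE ?negb_or ?iK ?jK ?(eq_sym j i) ?ij.
  case: (ltngtP i j) => [lij|lji|/val_inj eij]; last by move: ij; rewrite eij eqxx.
    by rewrite ltnn; ring.
  by rewrite ltnn; ring.
rewrite (eq_bigr (fun i : 'I_n => \sum_(j : 'I_n | (i < j)%N) F i j + \sum_(j : 'I_n | ~~ (i < j)%N) F i j)); last first.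
  by move=> i _; rewrite [LHS](bigID (fun j : 'I_n => (i < j)%N)) /=.
rewrite big_split /=.
rewrite (exchange_big_dep predT) //=.
rewrite [X in _ + X](eq_bigr (fun i : 'I_n => \sum_(j : 'I_n | (j < i)%N) F i j)); last first.
  move=> i _; rewrite big_mkcond [RHS]big_mkcond /=; apply: eq_bigr => j _.
  by case: (ltngtP i j) => [lij|lji|/val_inj ->] //=; rewrite Fii.
rewrite -big_split /=; apply: big1 => i _.
rewrite -big_split /=; apply: big1 => j _.
by rewrite addrC Fa.
Qed.
End K1.

Section K2.
Variables (A : comNzRingType) (n : nat) (j : 'I_n).
Implicit Types (z : 'I_n -> A) (f g u v : kvec A n) (I K : {set 'I_n}).

Definition av f := forall I : {set 'I_n}, j \in I -> f I = 0.
Definition outv f : kvec A n := [ffun I : {set 'I_n} => if j \in I then 0 else f I].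
Definition innv f : kvec A n := [ffun I : {set 'I_n} => if j \in I then 0 else ksgn A I j * f (j |: I)].
Definition glue u v : kvec A n :=
  [ffun I : {set 'I_n} => if j \in I then ksgn A (I :\ j) j * v (I :\ j) else u I].

Lemma av_out f : av (outv f).
Proof. by move=> I jI; rewrite ffunE jI. Qed.
Lemma av_inn f : av (innv f).
Proof. by move=> I jI; rewrite ffunE jI. Qed.

Lemma out_glue u v : av u -> outv (glue u v) = u.
Proof.
move=> hu; apply/ffunP=> I; rewrite !ffunE; case: ifP => jI //.
  by rewrite hu.
by rewrite jI.
Qed.

Lemma inn_glue u v : av v -> innv (glue u v) = v.
Proof.
move=> hv; apply/ffunP=> I; rewrite !ffunE; case: ifP => jI; first by rewrite hv.
rewrite setU11 setU1K ?jI // mulrA ksgn_sq mul1r //.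
Qed.

Lemma split_eq f g : outv f = outv g -> innv f = innv g -> f = g.
Proof.
move=> ho hi; apply/ffunP=> I; case jI: (j \in I).
  have := congr1 (fun h : kvec A n => h (I :\ j)) hi; rewrite !ffunE setD11 setD1K //.
  move=> E; have := congr1 (fun x => ksgn A (I :\ j) j * x) E.
  by rewrite !mulrA ksgn_sq !mul1r.
by have := congr1 (fun h : kvec A n => h I) ho; rewrite !ffunE jI.
Qed.

Lemma kd_av z f : av f -> av (kd z f).
Proof.
move=> hf I jI; rewrite kdE2 big1 // => i _.
by rewrite hf ?mul0r // !inE jI orbT.
Qed.

Lemma kd_av_ext z z' f : av f -> (forall i, i != j -> z i = z' i) ->
  kd z f = kd z' f.
Proof.
move=> hf E; apply/ffunP=> K; rewrite !kdE2; apply: eq_bigr => i iK.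
case: (eqVneq i j) => [->|ij]; first by rewrite hf ?mul0r // setU11.
by rewrite E.
Qed.

Lemma mul3 (a b c : A) : a * (b * c) = c * (b * a).
Proof. by ring. Qed.

Lemma sgnh (sj si F zi : A) (b : bool) :
  sj * (F * ((if ~~ b then -1 else 1) * si * zi)) =
  - ((if b then -1 else 1) * sj * F * (si * zi)).
Proof. by case: b => /=; ring. Qed.

Lemma kd_out z f : outv (kd z f) = kd z (outv f) + scl (z j) (innv f).
Proof.
apply/ffunP=> K; rewrite !ffunE; case: ifP => jK.
  by rewrite (kd_av _ (av_out f)) // mulr0 addr0.
rewrite !kdE2 (bigD1 j) ?jK //= [X in _ = X + _](bigD1 j) ?jK //=.
rewrite ffunE setU11 mul0r add0r ksgnU1 [LHS]addrC; congr (_ + _); last by apply: mul3.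

apply: eq_bigr => i /andP[iK ij]; rewrite ffunE !inE eq_sym (negbTE ij) jK.
by [].
Qed.

Lemma kd_inn z f : innv (kd z f) = - kd z (innv f).
Proof.
apply/ffunP=> K; rewrite !ffunE; case: ifP => jK.
  by rewrite (kd_av _ (av_inn f)) // oppr0.
rewrite !kdE2 [X in _ = - X](bigD1 j) ?jK //= ffunE setU11 mul0r add0r.
rewrite mulr_sumr -sumrN.
rewrite (eq_bigl (fun i => (i \notin K) && (i != j))); last first.
  by move=> i; rewrite !inE negb_or andbC.
apply: eq_bigr => i /andP[iK ij]; rewrite ffunE !inE eq_sym (negbTE ij) jK /=.
rewrite setUCA !ksgnU1 !ksgnU ?jK //.
have -> : (j < i)%N = ~~ (i < j)%N.
  by case: (ltngtP i j) => // /val_inj eij; move: ij; rewrite eij eqxx.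
  by rewrite ltnn mul1r; apply: sgnh.
by rewrite !inE negb_or jK eq_sym ij.
Qed.

Definition hom' l v := forall I : {set 'I_n}, #|I|.+1 != l -> v I = 0.

Lemma glue_hom l u v : khom l u -> hom' l v -> khom l (glue u v).
Proof.
move=> hu hv I Il; rewrite ffunE; case: ifP => jI; last by rewrite hu.
rewrite hv ?mulr0 //; move: Il; rewrite (cardsD1 j I) jI /= add1n //.
Qed.

Lemma out_hom l f : khom l f -> khom l (outv f).
Proof. by move=> hf I Il; rewrite ffunE hf ?if_same. Qed.

Lemma inn_hom l f : khom l f -> hom' l (innv f).
Proof.
move=> hf I Il; rewrite ffunE; case: ifP => // jI.
by rewrite hf ?mulr0 // cardsU1 jI.
Qed.

Lemma inn_hom1 l f : khom l.+1 f -> khom l (innv f).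
Proof. by move=> hf I Il; apply: (inn_hom hf); rewrite eqSS. Qed.

End K2.

Section K3.
Variables (A : comNzRingType) (n : nat).
Implicit Types (z : 'I_n -> A) (f g u v w : kvec A n) (I K : {set 'I_n}).

Lemma sclD c f g : scl c (f + g) = scl c f + scl c g.
Proof. by apply/ffunP=> I; rewrite !ffunE mulrDr. Qed.
Lemma sclN c f : scl c (- f) = - scl c f.
Proof. by apply/ffunP=> I; rewrite !ffunE mulrN. Qed.
Lemma sclA c d f : scl c (scl d f) = scl (c * d) f.
Proof. by apply/ffunP=> I; rewrite !ffunE mulrA. Qed.
Lemma scl1 f : scl 1 f = f.
Proof. by apply/ffunP=> I; rewrite !ffunE mul1r. Qed.
Lemma scl0 c : scl c 0 = 0 :> kvec A n.
Proof. by apply/ffunP=> I; rewrite !ffunE mulr0. Qed.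

Lemma khomD l f g : khom l f -> khom l g -> khom l (f + g).
Proof. by move=> hf hg I Il; rewrite ffunE hf ?hg ?addr0. Qed.
Lemma khomN l f : khom l f -> khom l (- f).
Proof. by move=> hf I Il; rewrite ffunE hf ?oppr0. Qed.
Lemma khomS l c f : khom l f -> khom l (scl c f).
Proof. by move=> hf I Il; rewrite ffunE hf ?mulr0. Qed.
Lemma khom0 l : khom l (0 : kvec A n).
Proof. by move=> I _; rewrite ffunE. Qed.

Lemma KR_ext z z' : (forall i, z i = z' i) -> koszul_regular z -> koszul_regular z'.
Proof.
move=> E H l f l0 hf df.
have [g [hg dg]] := H l f l0 hf (etrans (kd_ext _ E) df).
by exists g; split => //; rewrite -(kd_ext _ E).
Qed.

Variable j : 'I_n.
Definition P l v := khom l v /\ av j v.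

Lemma PD l f g : P l f -> P l g -> P l (f + g).
Proof.
by move=> [h1 a1] [h2 a2]; split; [exact: khomD|move=> I jI; rewrite ffunE a1 ?a2 ?addr0].
Qed.
Lemma PN l f : P l f -> P l (- f).
Proof. by move=> [h1 a1]; split; [exact: khomN|move=> I jI; rewrite ffunE a1 ?oppr0]. Qed.
Lemma PS l c f : P l f -> P l (scl c f).
Proof. by move=> [h1 a1]; split; [exact: khomS|move=> I jI; rewrite ffunE a1 ?mulr0]. Qed.
Lemma P0 l : P l 0.
Proof. by split; [exact: khom0|move=> I jI; rewrite ffunE]. Qed.

Definition SI z c := forall l u, (0 < l)%N -> P l u -> kd z u = 0 ->
  exists v w, [/\ P l v, kd z v = 0, P l.+1 w & u = scl c v + kd z w].
Definition II z c := forall l v w, P l v -> kd z v = 0 -> P l.+1 w ->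
  scl c v = kd z w -> exists w', P l.+1 w' /\ v = kd z w'.
Definition CA z c := forall l u v, P l.+1 u -> P l v ->
  kd z u + scl c v = 0 -> kd z v = 0 ->
  exists a b, [/\ P l.+2 a, P l.+1 b, u = kd z a + scl c b & v = - kd z b].

Lemma CA_SI z c : CA z c -> SI z c.
Proof.
move=> H [//|l] u _ hu du.
have E0 : kd z u + scl c 0 = 0 by rewrite scl0 addr0.
have [a [b [ha hb ua vb]]] := H l u 0 hu (P0 _) E0 (kd0 _).
exists b, a; split => //; last by rewrite addrC.
by apply/eqP; rewrite -oppr_eq0 -vb.
Qed.

Lemma CA_II z c : CA z c -> II z c.
Proof.
move=> H l v w hv dv hw cv.
have E0 : kd z (- w) + scl c v = 0 by rewrite kdN cv addNr.
have [a [b [ha hb ua vb]]] := H l (- w) v (PN hw) hv E0 dv.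
by exists (- b); split; [exact: PN|rewrite kdN].
Qed.

Lemma SI_pow z c m : SI z c -> SI z (c ^+ m).
Proof.
move=> H; elim: m => [|m IH] l u l0 hu du.
  by exists u, 0; rewrite expr0 scl1 kd0 addr0; split => //; exact: P0.
have [v [w [hv dv hw E]]] := IH l u l0 hu du.
have [v2 [w2 [hv2 dv2 hw2 E2]]] := H l v l0 hv dv.
exists v2, (scl (c ^+ m) w2 + w); split => //.
  by apply: PD => //; exact: PS.
by rewrite E E2 sclD sclA kdD kdZ exprSr addrA.
Qed.

Lemma II_pow z c m : II z c -> II z (c ^+ m).
Proof.
move=> H; elim: m => [|m IH] l v w hv dv hw E.
  by exists w; split => //; rewrite -E expr0 scl1.
have [w2 [hw2 E2]] : exists w2, P l.+1 w2 /\ scl (c ^+ m) v = kd z w2.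
  apply: (H l _ w) => //; [exact: PS|by rewrite kdZ dv scl0|].
  by rewrite sclA -exprS.
exact: (IH l v w2).
Qed.

Lemma SII_CA z c : SI z c -> II z c -> CA z c.
Proof.
move=> HS HI l u v hu hv E dv.
have [w' [hw' vw']] : exists w', P l.+1 w' /\ v = kd z w'.
  apply: (HI l v (- u)) => //; first exact: PN.
  by rewrite kdN; apply/eqP; rewrite -addr_eq0 addrC E.
have E0 : kd z (u + scl c w') = 0 by rewrite kdD kdZ -vw'.
have [z1 [a [hz dz ha E2]]] := HS l.+1 (u + scl c w') erefl (PD hu (PS _ hw')) E0.
exists a, (z1 - w'); split => //.
  by apply: PD => //; exact: PN.
  by rewrite sclD sclN addrA (addrC (kd z a)) -E2 addrK.
by rewrite kdD kdN dz sub0r opprK.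
Qed.

Lemma out0 : outv j (0 : kvec A n) = 0.
Proof. by apply/ffunP=> I; rewrite !ffunE if_same. Qed.
Lemma inn0 : innv j (0 : kvec A n) = 0.
Proof. by apply/ffunP=> I; rewrite !ffunE mulr0 if_same. Qed.

Lemma KR_CA z : koszul_regular z -> CA z (z j).
Proof.
move=> H l u v [hu au] [hv av] E dv.
have hf : khom l.+1 (glue j u v).
  by apply: glue_hom => // I Il; apply: hv; rewrite eqSS in Il.
have df : kd z (glue j u v) = 0.
  apply: (split_eq (j:=j)).
    by rewrite kd_out out_glue ?inn_glue // out0.
  by rewrite kd_inn inn_glue // dv oppr0 inn0.
have [g [hg dg]] := H l.+1 _ erefl hf df.
exists (outv j g), (innv j g); split.
- by split; [exact: out_hom|exact: av_out].
- by split; [exact: inn_hom1|exact: av_inn].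
- by rewrite -kd_out dg out_glue.
- by rewrite -kd_inn dg inn_glue // opprK.
Qed.

Lemma CA_KR z z' : (forall i, i != j -> z i = z' i) -> CA z (z' j) ->
  koszul_regular z'.
Proof.
move=> E H [//|l] f _ hf df.
have ex (u : kvec A n) : av j u -> kd z u = kd z' u by move=> hu; exact: (kd_av_ext hu E).
have E1 : kd z (outv j f) + scl (z' j) (innv j f) = 0.
  rewrite ex; last exact: av_out.
  by rewrite -(kd_out j z' f) df out0.
have E2 : kd z (innv j f) = 0.
  rewrite ex; last exact: av_inn.
  by apply/eqP; rewrite -oppr_eq0 -(kd_inn j z' f) df inn0.
have [a [b [[ha aa] [hb ab] ua vb]]] := H l (outv j f) (innv j f)
  (conj (out_hom j hf) (@av_out _ _ j f)) (conj (inn_hom1 j hf) (@av_inn _ _ j f)) E1 E2.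
exists (glue j a b); split.
  by apply: glue_hom => // I Il; apply: hb; rewrite eqSS in Il.
apply: (split_eq (j:=j)).
  by rewrite kd_out out_glue ?inn_glue // ua !ex.
by rewrite kd_inn inn_glue // vb ex.
Qed.

Lemma KR_pow1 z m : koszul_regular z ->
  koszul_regular (fun i => if i == j then z i ^+ m else z i).
Proof.
move=> H; apply: (CA_KR (z := z)).
  by move=> i /negbTE ->.
rewrite eqxx; apply: SII_CA; [apply: SI_pow|apply: II_pow].
  exact/CA_SI/KR_CA.
exact/CA_II/KR_CA.
Qed.
End K3.

Lemma KR_pow (A : comNzRingType) n (y : 'I_n -> A) m : koszul_regular y ->
  koszul_regular (fun i => y i ^+ m).
Proof.
move=> H.
suff: forall t, koszul_regular (fun i : 'I_n => if (i < t)%N then y i ^+ m else y i).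
  by move/(_ n); apply: KR_ext => i; rewrite ltn_ord.
elim=> [|t IH]; first by apply: KR_ext H => i.
case: (ltnP t n) => tn; last first.
  by apply: KR_ext IH => i; rewrite !(leq_trans (ltn_ord i)) // ltnW.
have := KR_pow1 (j:=Ordinal tn) (m:=m) IH; apply: KR_ext => i.
case: (eqVneq i (Ordinal tn)) => [->|ne] /=; first by rewrite ltnn ltnSn.
have ne' : (nat_of_ord i == t) = false.
  by apply/negbTE; move: ne; rewrite -(inj_eq val_inj).
by rewrite [in RHS]ltnS [in RHS]leq_eqVlt ne'.
Qed.

Section F1.
Variables (A : comNzRingType) (p : nat) (hp : p \in [pchar A]).
Implicit Types (x : A).

Lemma p_gt0 : (0 < p)%N.
Proof. exact: prime_gt0 (pcharf_prime hp). Qed.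

Lemma pn_gt0 m : (0 < p ^ m)%N.
Proof. by rewrite expn_gt0 p_gt0. Qed.

Lemma frob0 m : (0 : A) ^+ (p ^ m) = 0.
Proof. by rewrite expr0n gtn_eqF ?pn_gt0. Qed.

Lemma frobD m x y : (x + y) ^+ (p ^ m) = x ^+ (p ^ m) + y ^+ (p ^ m).
Proof.
elim: m => [|m IH]; first by rewrite !expr1.
by rewrite expnSr !exprM IH -!(pFrobenius_autE hp) rmorphD.
Qed.

Lemma frobN1 m : (-1 : A) ^+ (p ^ m) = -1.
Proof.
elim: m => [|m IH]; first by rewrite expr1.
by rewrite expnSr exprM IH -(pFrobenius_autE hp) rmorphN1.
Qed.

Lemma frobN m x : (- x) ^+ (p ^ m) = - x ^+ (p ^ m).
Proof. by rewrite -mulN1r exprMn frobN1 mulN1r. Qed.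

Lemma frobS m k : ((-1 : A) ^+ k) ^+ (p ^ m) = (-1) ^+ k.
Proof. by rewrite exprAC frobN1. Qed.

Lemma frob_sum m (I : Type) (r : seq I) (P : pred I) (F : I -> A) :
  (\sum_(i <- r | P i) F i) ^+ (p ^ m) = \sum_(i <- r | P i) F i ^+ (p ^ m).
Proof.
by apply: (big_morph (fun x => x ^+ (p ^ m))) => [x y|]; [exact: frobD|exact: frob0].
Qed.

Lemma frob_if m (b : bool) x : (if b then x else 0) ^+ (p ^ m) = if b then x ^+ (p ^ m) else 0.
Proof. by case: b; rewrite ?frob0. Qed.

Variable e : nat.
Definition Q k := (p ^ (e * k))%N.

Lemma coef_skmul (f g : {poly A}) k : (skmul p e f g)`_k =
  \sum_(i < k.+1) f`_i * g`_(k - i) ^+ (p ^ (e * i)).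
Proof.
rewrite coef_poly; case: ltnP => // hk; symmetry; apply: big1 => i _.
case: (ltnP i (size f)) => hi; last by rewrite nth_default ?mul0r.
rewrite [g`_(k - i)]nth_default ?frob0 ?mulr0 //.
move: (nat_of_ord i) hi => m hm. move: (size f) (size g) hk hm => a b. lia.
Qed.

Lemma coef_skmulC (f : {poly A}) c k : (skmul p e f c%:P)`_k = f`_k * c ^+ Q k.
Proof.
rewrite coef_skmul big_ord_recr /= subnn coefC eqxx big1 ?add0r // => i _.
rewrite coefC subn_eq0 leqNgt ltn_ord /= frob0 mulr0 //.
Qed.

Lemma coef_skmul0 (f : {poly A}) k : (skmul p e f 0)`_k = 0.
Proof. by rewrite -polyC0 coef_skmulC /Q frob0 mulr0. Qed.

Lemma coef_skmulX (f : {poly A}) s c k : s ^+ (p ^ e) = s ->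
  (skmul p e f (s%:P * ('X - c%:P)))`_k =
  (if k is k'.+1 then f`_k' * s else 0) - f`_k * (s * c ^+ Q k).
Proof.
move=> hs.
have hsQ m : s ^+ Q m = s.
  rewrite /Q; elim: m => [|m IH]; first by rewrite muln0 expr1.
  by rewrite mulnS expnD exprM hs IH.
rewrite /Q in hsQ *.
rewrite coef_skmul big_ord_recr /= subnn coefCM coefB coefX coefC eqxx /= sub0r.
rewrite mulrN frobN exprMn hsQ mulrN.
case: k => [|k]; first by rewrite big_ord0 add0r.
rewrite big_ord_recr /= subSnn coefCM coefB coefX coefC /= subr0 mulr1 hsQ.
rewrite big1 ?add0r // => i _.
have h2 : (1 < k.+1 - i)%N.
  move: (nat_of_ord i) (ltn_ord i) => m hm; lia.
rewrite coefCM coefB coefX coefC.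
by rewrite (gtn_eqF h2) (gtn_eqF (ltnW h2)) ?subr0 mulr0 frob0 mulr0.
Qed.

End F1.

Section F2.
Variables (A : comNzRingType) (p : nat) (hp : p \in [pchar A]) (e n : nat) (y : 'I_n -> A).
Implicit Types (f g : fkvec A n) (u v w : kvec A n) (I K : {set 'I_n}).

Definition ca f k : kvec A n := [ffun I : {set 'I_n} => (f (I, false))`_k].
Definition cb f k : kvec A n := [ffun I : {set 'I_n} => (f (I, true))`_k].
Definition yp m := fun i => y i ^+ m.
Definition sg w : kvec A n := [ffun I : {set 'I_n} => (-1) ^+ #|I| * w I].
Definition prevb f k : kvec A n := if k is k'.+1 then cb f k' else 0.
Definition ybm k w : kvec A n := [ffun I : {set 'I_n} => yJ y p e I ^+ Q p e k * w I].

Lemma frob_kbd m (z : 'I_n -> A) I K :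
  (kbd z I K) ^+ (p ^ m) = kbd (fun i => z i ^+ (p ^ m)) I K.
Proof.
rewrite !kbdE (frob_sum hp); apply: eq_bigr => i _.
by rewrite (frob_if hp) exprMn /ksgn (frobS hp).
Qed.

Lemma fsingle_sumE (T : finType) (P : pred T) (F : T -> {set 'I_n} * bool)
   (c : T -> {poly A}) (w : {set 'I_n} * bool) :
  (\sum_(i | P i) fsingle (F i) (c i)) w = \sum_(i | P i) (if w == F i then c i else 0).
Proof. by rewrite sum_ffunE; apply: eq_bigr => i _; rewrite ffunE. Qed.

Lemma fkbdF I (w : {set 'I_n} * bool) : fkbd y p e (I, false) w = if w.2 then 0 else (kbd y I w.1)%:P.
Proof.
rewrite /fkbd /= fsingle_sumE kbdE rmorph_sum; case: w => K b /=.
case: b => /=; first by rewrite big1 // => i _; rewrite xpair_eqE andbF.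
by apply: eq_bigr => i _; rewrite xpair_eqE andbT; case: ifP.
Qed.

Lemma fkbdT I (w : {set 'I_n} * bool) : fkbd y p e (I, true) w =
  if w.2 then (kbd (yp (p ^ e)) I w.1)%:P
  else if w.1 == I then ((-1) ^+ #|I|)%:P * ('X - (yJ y p e I)%:P) else 0.
Proof.
rewrite /fkbd /= ffunE fsingle_sumE kbdE rmorph_sum; case: w => K b /=.
rewrite ffunE xpair_eqE; case: b => /=.
  rewrite andbF add0r; apply: eq_bigr => i _; rewrite xpair_eqE andbT.
  by case: ifP.
rewrite andbT big1 ?addr0 // => i _; by rewrite xpair_eqE andbF.
Qed.

Lemma fkdE f (w : {set 'I_n} * bool) k : (fkd y p e f w)`_k =
  \sum_(I : {set 'I_n}) ((skmul p e (f (I, true)) (fkbd y p e (I, true) w))`_k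
                     + (skmul p e (f (I, false)) (fkbd y p e (I, false) w))`_k).
Proof.
rewrite /fkd sum_ffunE coef_sum.
under eq_bigr do rewrite ffunE.
pose G (I : {set 'I_n}) (b : bool) := (skmul p e (f (I, b)) (fkbd y p e (I, b) w))`_k.
transitivity (\sum_(z : {set 'I_n} * bool) G z.1 z.2); first by apply: eq_bigr => -[I b].
rewrite -(pair_bigA _ G) /=.
by apply: eq_bigr => I _; rewrite big_bool.
Qed.

Lemma kbd_ext (z z' : 'I_n -> A) I K : (forall i, z i = z' i) -> kbd z I K = kbd z' I K.
Proof. by move=> E; rewrite !kbdE; apply: eq_bigr => i _; rewrite E. Qed.

Lemma ringh1 (a b s c : A) : a * s - b * (s * c) = s * (a - c * b).
Proof. by ring. Qed.
Lemma ringh2 (b s c : A) : 0 - b * (s * c) = s * (0 - c * b).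
Proof. by ring. Qed.

Lemma ca_fkd f k : ca (fkd y p e f) k =
  kd (yp (Q p e k)) (ca f k) + sg (prevb f k - ybm k (cb f k)).
Proof.
apply/ffunP => K; rewrite !ffunE fkdE big_split /=.
rewrite addrC kdE; congr (_ + _).
  apply: eq_bigr => I _; rewrite fkbdF /= (coef_skmulC hp) /Q frob_kbd ffunE.
  by [].
rewrite (bigD1 K) //= big1 ?addr0; last first.
  by move=> I /negbTE IK; rewrite fkbdT /= eq_sym IK (coef_skmul0 hp).
rewrite fkbdT /= eqxx (coef_skmulX hp); last exact: (frobS hp).
case: k => [|k] /=; rewrite ffunE; [exact: ringh2|exact: ringh1].
Qed.

Lemma cb_fkd f k : cb (fkd y p e f) k = kd (yp (Q p e k.+1)) (cb f k).
Proof.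
apply/ffunP => K; rewrite !ffunE fkdE big_split /=.
rewrite [X in _ + X]big1 ?addr0; last first.
  by move=> I _; rewrite fkbdF /= -polyC0 (coef_skmulC hp) /Q (frob0 hp) mulr0.
rewrite kdE; apply: eq_bigr => I _.
rewrite fkbdT /= (coef_skmulC hp) /Q frob_kbd ffunE; congr (_ * _).
by apply: kbd_ext => i; rewrite /yp -exprM -expnD mulnS.
Qed.

End F2.

Section F3.
Variables (A : comNzRingType) (p : nat) (hp : p \in [pchar A]) (e n : nat) (y : 'I_n -> A).
Implicit Types (f g h : fkvec A n) (u v w : kvec A n) (I K : {set 'I_n}).

Local Notation fkd := (fkd y p e).
Local Notation Q := (Q p e).
Local Notation ybm := (ybm p e y).
Local Notation ypw m := (@yp _ _ y m).

Lemma fk_ext f g : (forall k, ca f k = ca g k) -> (forall k, cb f k = cb g k) -> f = g.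
Proof.
move=> ha hb; apply/ffunP => -[I b]; apply/polyP => k.
case: b.
  by have := congr1 (fun x : kvec A n => x I) (hb k); rewrite !ffunE.
by have := congr1 (fun x : kvec A n => x I) (ha k); rewrite !ffunE.
Qed.

Definition fkbuild (N : nat) (al be : nat -> kvec A n) : fkvec A n :=
  [ffun z : {set 'I_n} * bool => \poly_(k < N) (if z.2 then be k z.1 else al k z.1)].

Lemma ca_build N al be k : (forall k, (N <= k)%N -> al k = 0) ->
  ca (fkbuild N al be) k = al k.
Proof.
move=> H; apply/ffunP => I; rewrite !ffunE coef_poly /=.
by case: ltnP => // /H ->; rewrite ffunE.
Qed.

Lemma cb_build N al be k : (forall k, (N <= k)%N -> be k = 0) ->
  cb (fkbuild N al be) k = be k.
Proof.
move=> H; apply/ffunP => I; rewrite !ffunE coef_poly /=.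
by case: ltnP => // /H ->; rewrite ffunE.
Qed.

Lemma fkhom_build L N (al be : nat -> kvec A n) : (forall k, khom L (al k)) ->
  (forall k (J : {set 'I_n}), #|J|.+1 != L -> be k J = 0) -> fkhom L (fkbuild N al be).
Proof.
move=> ha hb [I b] /= hz; rewrite ffunE /=; apply/polyP => k.
rewrite coef_poly coef0; case: ifP => // _.
case: b hz => /=; rewrite /fkdeg /=.
  by rewrite addn1 => /hb ->.
by rewrite addn0 => /ha ->.
Qed.

Lemma fkhom_ca L f k : fkhom L f -> khom L (ca f k).
Proof. by move=> H I hI; rewrite ffunE H ?coef0 // /fkdeg /= addn0. Qed.

Lemma fkhom_cb L f k (J : {set 'I_n}) : fkhom L f -> #|J|.+1 != L -> cb f k J = 0.
Proof. by move=> H hJ; rewrite ffunE H ?coef0 // /fkdeg /= addn1. Qed.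

Lemma fkhom_of L f : (forall k, khom L (ca f k)) ->
  (forall k (J : {set 'I_n}), #|J|.+1 != L -> cb f k J = 0) -> fkhom L f.
Proof.
move=> ha hb [I b] /= hz; apply/polyP => k; rewrite coef0.
case: b hz; rewrite /fkdeg /=.
  by rewrite addn1 => /(hb k) ; rewrite ffunE.
by rewrite addn0 => /(ha k); rewrite ffunE.
Qed.

Lemma fkhomD L f g : fkhom L f -> fkhom L g -> fkhom L (f + g).
Proof. by move=> hf hg z hz; rewrite ffunE hf ?hg ?addr0. Qed.

Lemma skmulDl (a b c : {poly A}) : skmul p e (a + b) c = skmul p e a c + skmul p e b c.
Proof.
apply/polyP => k; rewrite coefD !(coef_skmul hp) -big_split /=.
by apply: eq_bigr => i _; rewrite coefD mulrDl.
Qed.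

Lemma skmul0l (c : {poly A}) : skmul p e 0 c = 0.
Proof.
by apply/polyP => k; rewrite (coef_skmul hp) coef0 big1 // => i _; rewrite coef0 mul0r.
Qed.

Lemma fkdD f g : fkd (f + g) = fkd f + fkd g.
Proof.
apply/ffunP => w; rewrite ffunE /fkd !sum_ffunE -big_split /=.
by apply: eq_bigr => z _; rewrite !ffunE skmulDl.
Qed.

Lemma fkd0 : fkd 0 = 0.
Proof.
apply/ffunP => w; rewrite /fkd sum_ffunE ffunE big1 // => z _.
by rewrite !ffunE skmul0l.
Qed.

Lemma fkdN f : fkd (- f) = - fkd f.
Proof. by apply/eqP; rewrite -subr_eq0 opprK -fkdD addNr fkd0. Qed.

Lemma fkdB f g : fkd (f - g) = fkd f - fkd g.
Proof. by rewrite fkdD fkdN. Qed.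

Lemma caB f g k : ca (f - g) k = ca f k - ca g k.
Proof. by apply/ffunP => I; rewrite !ffunE coefB. Qed.
Lemma cbB f g k : cb (f - g) k = cb f k - cb g k.
Proof. by apply/ffunP => I; rewrite !ffunE coefB. Qed.
Lemma ca0 k : ca (0 : fkvec A n) k = 0.
Proof. by apply/ffunP => I; rewrite !ffunE coef0. Qed.
Lemma cb0 k : cb (0 : fkvec A n) k = 0.
Proof. by apply/ffunP => I; rewrite !ffunE coef0. Qed.

Lemma rh1 (a b c : A) : -1 * a * b * c = - (a * (b * c)).
Proof. by ring. Qed.

Lemma kd_sg (z : 'I_n -> A) w : kd z (sg w) = - sg (kd z w).
Proof.
apply/ffunP => K; rewrite !ffunE !kdE2 mulr_sumr -sumrN; apply: eq_bigr => i iK.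
by rewrite /sg ffunE cardsU1 iK add1n exprS; apply: rh1.
Qed.

Lemma yJU i K : i \notin K -> yJ y p e (i |: K) = y i ^+ (p ^ e - 1) * yJ y p e K.
Proof. by move=> iK; rewrite /yJ big_setU1. Qed.

Lemma kd_ybm k w : kd (ypw (Q k)) (ybm k w) = ybm k (kd (ypw (Q k.+1)) w).
Proof.
apply/ffunP => K; rewrite !ffunE !kdE2 mulr_sumr; apply: eq_bigr => i iK.
rewrite ffunE yJU // /yp.
have -> : y i ^+ Q k.+1 = (y i ^+ (p ^ e - 1)) ^+ Q k * y i ^+ Q k.
  rewrite -exprM -exprD; congr (_ ^+ _).
  rewrite /Q mulnS expnD.
  have := pn_gt0 hp e; move: (p ^ e)%N (p ^ (e * k))%N => a b ha; nia.
rewrite exprMn; ring.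
Qed.

Lemma prevb_fkd f k : prevb (fkd f) k = kd (ypw (Q k)) (prevb f k).
Proof. by case: k => [|k] /=; [rewrite kd0|rewrite (cb_fkd hp)]. Qed.

Lemma sgD u v : sg (u + v) = sg u + sg v.
Proof. by apply/ffunP => I; rewrite !ffunE mulrDr. Qed.
Lemma sgN u : sg (- u) = - sg u.
Proof. by apply/ffunP => I; rewrite !ffunE mulrN. Qed.
Lemma ybmD k u v : ybm k (u + v) = ybm k u + ybm k v.
Proof. by apply/ffunP => I; rewrite !ffunE mulrDr. Qed.
Lemma ybmN k u : ybm k (- u) = - ybm k u.
Proof. by apply/ffunP => I; rewrite !ffunE mulrN. Qed.
Lemma sg0 : sg (0 : kvec A n) = 0.
Proof. by apply/ffunP => I; rewrite !ffunE mulr0. Qed.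
Lemma ybm0 k : ybm k (0 : kvec A n) = 0.
Proof. by apply/ffunP => I; rewrite !ffunE mulr0. Qed.

Lemma fkdd f : fkd (fkd f) = 0.
Proof.
apply: fk_ext => k; last by rewrite cb0 !(cb_fkd hp) kdd.
rewrite ca0 (ca_fkd hp) prevb_fkd !(cb_fkd hp) (ca_fkd hp) kdD kdd add0r kd_sg.
by rewrite kdB kd_ybm addNr.
Qed.

End F3.

Lemma fchoice (T : Type) (P : nat -> T -> Prop) :
  (forall k, exists x, P k x) -> exists g : nat -> T, forall k, P k (g k).
Proof.
move=> H; exists (fun k => proj1_sig (constructive_indefinite_description _ (H k))).
by move=> k; exact: proj2_sig.
Qed.

Section G.
Variables (A : comNzRingType) (n : nat).
Implicit Types (z : 'I_n -> A) (u v w : kvec A n).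

Lemma gen0 z : in_gen z 0.
Proof. by exists (fun _ => 0); rewrite big1 // => i _; rewrite mul0r. Qed.

Lemma genD z a b : in_gen z a -> in_gen z b -> in_gen z (a + b).
Proof.
move=> [c1 ->] [c2 ->]; exists (fun i => c1 i + c2 i).
by rewrite -big_split; apply: eq_bigr => i _; rewrite mulrDl.
Qed.

Lemma genN z a : in_gen z a -> in_gen z (- a).
Proof.
move=> [c ->]; exists (fun i => - c i).
by rewrite -sumrN; apply: eq_bigr => i _; rewrite mulNr.
Qed.

Lemma gen_sum z (I : Type) (r : seq I) (P : pred I) (F : I -> A) :
  (forall i, P i -> in_gen z (F i)) -> in_gen z (\sum_(i <- r | P i) F i).
Proof.
by move=> H; apply: (big_ind (in_gen z)) => //; [exact: gen0|exact: genD].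
Qed.

Lemma gen_pow (y : 'I_n -> A) m m' x : (m' <= m)%N ->
  in_gen (fun i => y i ^+ m) x -> in_gen (fun i => y i ^+ m') x.
Proof.
move=> hm [c ->]; exists (fun i => c i * y i ^+ (m - m')).
by apply: eq_bigr => i _; rewrite -mulrA -exprD subnK.
Qed.

Lemma gen_1 (y : 'I_n -> A) x : in_gen (fun i => y i ^+ 1) x -> in_gen y x.
Proof. by move=> [c ->]; exists c; apply: eq_bigr => i _; rewrite expr1. Qed.

Lemma ksgn1 (i : 'I_n) : ksgn A [set i] i = 1.
Proof.
rewrite -(setU0 [set i]) ksgnU1 /ksgn (_ : [set k in set0 | _] = set0) ?cards0 //.
by apply/setP=> k; rewrite !inE.
Qed.

Lemma kd_set0 z w : kd z w set0 = \sum_i w [set i] * z i.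
Proof.
rewrite kdE2 (eq_bigl predT); last by move=> i; rewrite inE.
by apply: eq_bigr => i _; rewrite setU0 ksgn1 mul1r.
Qed.

Lemma kd_gen z w : in_gen z (kd z w set0).
Proof. by rewrite kd_set0; exists (fun i => w [set i]). Qed.

Lemma gen_kd z v : khom 0 v -> in_gen z (v set0) ->
  exists w, khom 1 w /\ kd z w = v.
Proof.
move=> hv [c hc].
exists [ffun I : {set 'I_n} => \sum_i (if I == [set i] then c i else 0)]; split.
  move=> I hI; rewrite ffunE big1 // => i _.
  by case: eqP => // EI; move: hI; rewrite EI cards1.
apply/ffunP => K; case: (eqVneq K set0) => [->|K0].
  rewrite kd_set0 hc; apply: eq_bigr => i _; rewrite ffunE (bigD1 i) //= eqxx.
  by rewrite big1 ?addr0 // => j /negbTE ji; rewrite (inj_eq set1_inj) eq_sym ji.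
rewrite hv; last by rewrite cards_eq0.
rewrite (@kd_hom A n z 0) //; last by rewrite cards_eq0.
move=> I hI; rewrite ffunE big1 // => i _.
by case: eqP => // EI; move: hI; rewrite EI cards1.
Qed.

End G.

Section H.
Variables (A : comNzRingType) (p : nat) (hp : p \in [pchar A]) (e n : nat) (y : 'I_n -> A).
Implicit Types (f g h : fkvec A n) (u v w : kvec A n) (I K : {set 'I_n}).

Local Notation fkd := (fkd y p e).
Local Notation Q := (Q p e).
Local Notation ybm := (ybm p e y).
Local Notation ypw m := (@yp _ _ y m).

Lemma bound f : exists N, forall k, (N <= k)%N -> ca f k = 0 /\ cb f k = 0.
Proof.
exists (\max_(z : {set 'I_n} * bool) size (f z)) => k hk.
have H z : (f z)`_k = 0.
  by apply: nth_default; apply: leq_trans hk; apply: (leq_bigmax z).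
by split; apply/ffunP => I; rewrite !ffunE H.
Qed.

Lemma fkhomN L f : fkhom L f -> fkhom L (- f).
Proof. by move=> hf z hz; rewrite ffunE hf ?oppr0. Qed.

Lemma fkd_hom L f : fkhom L.+1 f -> fkhom L (fkd f).
Proof.
move=> hf; apply: fkhom_of => k.
  rewrite (ca_fkd hp) => I hI; rewrite ffunE.
  rewrite (kd_hom _ (fkhom_ca k hf)) // add0r !ffunE.
  have hb : forall k', (f (I, true))`_k' = 0.
    by move=> k'; have := fkhom_cb k' hf hI; rewrite ffunE; apply.
  by case: k => [|k] /=; rewrite !ffunE !hb mulr0 subrr mulr0.
move=> J hJ; rewrite (cb_fkd hp).
have hb : khom L (cb f k) by move=> I hI; apply: (fkhom_cb k hf); rewrite eqSS.
move: hJ hb; case: L hf => [|L] hf hJ hb; first by rewrite kd_hom0 // ffunE.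
by rewrite (kd_hom _ hb).
Qed.

Lemma prevb0 f k : (forall k, cb f k = 0) -> prevb f k = 0.
Proof. by move=> H; case: k => [|k] //=. Qed.

Lemma ysetE k : yJ y p e set0 ^+ Q k = 1.
Proof. by rewrite /yJ big_set0 expr1n. Qed.

Lemma hlp (a b c : A) : a + (b - c) = 0 -> b = c - a.
Proof.
move=> H; have E : b - (c - a) = a + (b - c) by ring.
by apply/eqP; rewrite -subr_eq0 E H.
Qed.

Theorem fk_exact (HK : koszul_regular y) l f : (1 <= l)%N -> fkhom l f ->
  fkd f = 0 -> exists g, fkhom l.+1 g /\ fkd g = f.
Proof.
case: l => [//|l] _ hf df.
have [N hN] := bound f.
have cyc_b k : kd (ypw (Q k.+1)) (cb f k) = 0 by rewrite -(cb_fkd hp) df cb0.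
have cyc_a k : kd (ypw (Q k)) (ca f k) + sg (prevb f k - ybm k (cb f k)) = 0.
  by rewrite -(ca_fkd hp) df ca0.
have hb k : khom l (cb f k).
  by move=> J hJ; apply: (fkhom_cb k hf); rewrite eqSS.
have down : l = 0%N -> forall k, in_gen (ypw (Q k.+1)) (cb f k set0).
  move=> l0; suff H : forall d k, (N <= k + d)%N -> in_gen (ypw (Q k.+1)) (cb f k set0).
    by move=> k; apply: (H N); rewrite leq_addl.
  elim=> [|d IH] k hk.
    by rewrite addn0 in hk; rewrite (proj2 (hN k hk)) ffunE; exact: gen0.
  have hk1 : (N <= k.+1 + d)%N by rewrite addSnnS.
  have IH1 := IH k.+1 hk1.
  have E := congr1 (fun v : kvec A n => v set0) (cyc_a k.+1).
  rewrite /= !ffunE cards0 expr0 mul1r ysetE mul1r in E.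
  have -> : cb f k set0 = cb f k.+1 set0 - kd (ypw (Q k.+1)) (ca f k.+1) set0.
    by rewrite !ffunE; apply: hlp.
  apply: genD; last by apply: genN; exact: kd_gen.
  apply: (gen_pow (m := Q k.+2)) => //.
  have := pn_gt0 hp e; rewrite /Q (mulnS e k.+1) expnD.
  by move: (p ^ e)%N (p ^ (e * k.+1))%N => a b ha; nia.
have [be Hbe] : exists be : nat -> kvec A n, forall k,
    [/\ khom l.+1 (be k), kd (ypw (Q k.+1)) (be k) = cb f k & ((N <= k)%N -> be k = 0)].
  apply: (fchoice (P := fun k (x : kvec A n) =>
    [/\ khom l.+1 x, kd (ypw (Q k.+1)) x = cb f k & ((N <= k)%N -> x = 0)])) => k.
  case: (leqP N k) => Nk.
    exists 0; split => //; first exact: khom0.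
    by rewrite kd0 (proj2 (hN k Nk)).
  have [w [hw dw]] : exists w, khom l.+1 w /\ kd (ypw (Q k.+1)) w = cb f k.
    case: l hf hb cyc_b cyc_a down => [|l] hf hb cyc_b cyc_a down.
      by apply: gen_kd => //; exact: down.
    have KR := KR_pow (m := Q k.+1) HK; exact: (KR l.+1 (cb f k) erefl (hb k) (cyc_b k)).
  by exists w; split => // /(leq_trans Nk); rewrite ltnn.
pose g1 := fkbuild N (fun _ => 0) be.
have cag1 k : ca g1 k = 0 by rewrite ca_build.
have cbg1 k : cb g1 k = be k by rewrite cb_build // => k' hk; have [_ _ ->] := Hbe k'.
have hg1 : fkhom l.+2 g1.
  apply: fkhom_build => [k|k J hJ]; first exact: khom0.
  by have [hbe _ _] := Hbe k; apply: hbe; rewrite -eqSS.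
pose h := f - fkd g1.
have cbh k : cb h k = 0.
  by rewrite cbB (cb_fkd hp) cbg1; have [_ -> _] := Hbe k; rewrite subrr.
have dh : fkd h = 0 by rewrite (fkdB hp) (fkdd hp) df subrr.
have hh : fkhom l.+1 h by apply: fkhomD => //; apply: fkhomN; exact: fkd_hom.
have cyc_h k : kd (ypw (Q k)) (ca h k) = 0.
  have := congr1 (fun x => ca x k) dh; rewrite /= (ca_fkd hp) ca0 prevb0 // cbh.
  by rewrite ybm0 subrr sg0 addr0.
have [N' hN'] := bound h.
have [al Hal] : exists al : nat -> kvec A n, forall k,
    [/\ khom l.+2 (al k), kd (ypw (Q k)) (al k) = ca h k & ((N' <= k)%N -> al k = 0)].
  apply: (fchoice (P := fun k (x : kvec A n) =>
    [/\ khom l.+2 x, kd (ypw (Q k)) x = ca h k & ((N' <= k)%N -> x = 0)])) => k.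
  case: (leqP N' k) => Nk.
    exists 0; split => //; first exact: khom0.
    by rewrite kd0 (proj1 (hN' k Nk)).
  have KR := KR_pow (m := Q k) HK.
  have [w [hw dw]] := KR l.+1 (ca h k) erefl (fkhom_ca k hh) (cyc_h k).
  by exists w; split => // /(leq_trans Nk); rewrite ltnn.
pose g2 := fkbuild N' al (fun _ => 0).
have cag2 k : ca g2 k = al k by rewrite ca_build // => k' hk; have [_ _ ->] := Hal k'.
have cbg2 k : cb g2 k = 0 by rewrite cb_build.
have hg2 : fkhom l.+2 g2.
  apply: fkhom_build => [k|k J hJ]; first by have [] := Hal k.
  by rewrite ffunE.
have dg2 : fkd g2 = h.
  apply: fk_ext => k.
    rewrite (ca_fkd hp) cag2 prevb0 // cbg2 ybm0 subrr sg0 addr0.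
    by have [_ -> _] := Hal k.
  by rewrite (cb_fkd hp) cbg2 kd0 cbh.
exists (g1 + g2); split; first exact: fkhomD.
by rewrite (fkdD hp) dg2 /h addrC subrK.
Qed.

End H.

Section H0.
Variables (A : comNzRingType) (p : nat) (hp : p \in [pchar A]) (e n : nat) (y : 'I_n -> A).
Implicit Types (f g h : fkvec A n) (u v w : kvec A n) (I K : {set 'I_n}).

Local Notation fkd := (fkd y p e).
Local Notation Q := (Q p e).
Local Notation ybm := (ybm p e y).
Local Notation ypw m := (@yp _ _ y m).

Lemma widen (q : {poly A}) M : (size q <= M)%N ->
  \sum_(i < size q) q`_i = \sum_(i < M) q`_i.
Proof.
move=> hM; rewrite (big_ord_widen M (fun i => q`_i)) // big_mkcond /=.
by apply: eq_bigr => i _; case: ltnP => // hi; rewrite nth_default.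
Qed.

Lemma rh2 (s a b : A) : s - a - (s - (a + b)) = b.
Proof. by ring. Qed.

Lemma fk_surj a : exists f : fkvec A n, fkhom 0 f /\ fkaug f = a.
Proof.
exists (fsingle (set0, false) a%:P); split.
  move=> z hz; rewrite ffunE; case: eqP => // ez.
  by move: hz; rewrite ez /fkdeg /= cards0.
rewrite /fkaug ffunE eqxx (widen (M := 1)) ?size_polyC_leq1 //.
by rewrite big_ord1 coefC.
Qed.

Lemma ca_set0 f k : ca f k set0 = (f (set0, false))`_k.
Proof. by rewrite ffunE. Qed.

Lemma fk_H0 f : fkhom 0 f ->
  (in_gen y (fkaug f) <-> exists g, fkhom 1 g /\ fkd g = f).
Proof.
move=> hf.
set q := f (set0, false).
have hfa k K : K != set0 -> ca f k K = 0.
  by move=> K0; apply: (fkhom_ca k hf); rewrite cards_eq0.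
have hfb k : cb f k = 0.
  by apply/ffunP => J; rewrite [RHS]ffunE (fkhom_cb k hf).
split.
- move=> [c hc].
  set s := fkaug f.
  pose v0 : kvec A n := [ffun I : {set 'I_n} => if I == set0 then s else 0].
  have [w0 [hw0 dw0]] : exists w, khom 1 w /\ kd y w = v0.
    apply: gen_kd.
      by move=> I hI; rewrite ffunE; case: eqP => // EI; move: hI; rewrite EI cards0.
    by rewrite ffunE eqxx; exists c.
  pose al k : kvec A n := if k == 0%N then w0 else 0.
  pose be k : kvec A n :=
    [ffun I : {set 'I_n} => if I == set0 then s - \sum_(i < k.+1) q`_i else 0].
  pose N := (size q).+1.
  pose g := fkbuild N al be.
  have hbe k : (N <= k)%N -> be k = 0.
    move=> hk; apply/ffunP => I; rewrite !ffunE.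
    rewrite -(widen (M := k.+1)) ?subrr ?if_same //.
    by move: hk; rewrite /N; move: (size q) => a; lia.
  have cag k : ca g k = al k.
    by rewrite ca_build // => k' hk; rewrite /al; case: k' hk.
  have cbg k : cb g k = be k by rewrite cb_build.
  have hal k : khom 1 (al k) by rewrite /al; case: (k == 0%N) => //; exact: khom0.
  have hbe0 k K : K != set0 -> be k K = 0 by move=> /negbTE K0; rewrite ffunE K0.
  have be_set0 k : be k set0 = s - \sum_(i < k.+1) q`_i by rewrite ffunE eqxx.
  have al0 : al 0%N = w0 by [].
  have alS k : al k.+1 = 0 by [].
  have hgb : fkhom 1 g.
    apply: fkhom_build => // k J hJ; apply: hbe0.
    by rewrite -cards_eq0; move: hJ; rewrite eqSS.
  clearbody g; clearbody al be.
  exists g; split => //.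
  apply: fk_ext => k; last first.
    by rewrite (cb_fkd hp) cbg hfb kd_hom0 // => I hI; apply: hbe0; rewrite -cards_eq0.
  rewrite (ca_fkd hp) cag cbg; apply/ffunP => K.
  case: (eqVneq K set0) => [->|K0]; last first.
    rewrite hfa // ffunE (kd_hom _ (hal k)) ?cards_eq0 // add0r /sg ffunE.
    rewrite ffunE ffunE /ybm ffunE hbe0 // mulr0 subr0.
    by case: k => [|k] /=; rewrite ?cbg ?hbe0 ?ffunE ?mulr0.
  rewrite ca_set0 ffunE /sg ffunE cards0 expr0 mul1r ffunE ffunE /ybm ffunE ysetE mul1r.
  case: k => [|k] /=.
    rewrite al0 (kd_ext _ (z' := y)) ?dw0 ?ffunE ?eqxx; last first.
      by move=> i; rewrite /yp /Q muln0 expn0 expr1.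
    by rewrite be_set0 big_ord1 sub0r opprB addrC subrK.
  rewrite alS kd0 ffunE add0r cbg !be_set0 [in X in _ - X]big_ord_recr /=.
  exact: rh2.
- move=> [g [hg dg]].
  have [N hN] := bound g.
  pose M := maxn (size q) N.+1.
  have hq k : q`_k = kd (ypw (Q k)) (ca g k) set0 +
      (prevb g k set0 - prevb g k.+1 set0).
    rewrite -ca_set0 -dg (ca_fkd hp) !ffunE cards0 expr0 mul1r ysetE mul1r.
    by [].
  rewrite /fkaug -/q (widen (M := M)) ?leq_maxl //.
  under eq_bigr do rewrite hq.
  rewrite big_split /=; apply: genD.
    apply: gen_sum => k _; apply: gen_1; apply: (gen_pow (m := Q k)).
      exact: pn_gt0 hp _.
    exact: kd_gen.
  pose t i := prevb g i set0.
  have -> : \sum_(i < M) (prevb g i set0 - cb g i set0) = 0.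
    rewrite (eq_bigr (fun i : 'I_M => - (t i.+1 - t i))); last by move=> i _; rewrite opprB.
    rewrite sumrN -(big_mkord predT (fun i => t i.+1 - t i)) telescope_sumr //.
    have hM : (N.+1 <= M)%N by rewrite /M leq_maxr.
    have hM0 : (0 < M)%N by apply: leq_trans hM.
    have hNM : (N <= M.-1)%N by rewrite -ltnS prednK.
    have ht0 : t 0%N = 0 by rewrite /t /= ffunE.
    have htM : t M = 0.
      rewrite /t -(prednK hM0) /=.
      by rewrite (proj2 (hN _ hNM)) ffunE.
    by rewrite ht0 htM subrr oppr0.
  exact: gen0.
Qed.

End H0.


Theorem corollary3 (A : comNzRingType) (p : nat) (hp : p \in [pchar A])
    (HN : noetherian A) (HR : regular_ring A)
    (e : nat) (he : (1 <= e)%N) (n : nat) (y : 'I_n -> A)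
    (HK : koszul_regular y) :
  (* FK is a complex *)
  (forall f : fkvec A n, fkd y p e (fkd y p e f) = 0) /\
  (* exact in every degree l >= 1 (including injectivity of ∂_(n+1)) *)
  (forall (l : nat) (f : fkvec A n), (1 <= l)%N -> fkhom l f ->
     fkd y p e f = 0 -> exists g, fkhom l.+1 g /\ fkd y p e g = f) /\
  (* the augmentation FK_0 -> A/I_n is surjective ... *)
  (forall a : A, exists f : fkvec A n, fkhom 0 f /\ fkaug f = a) /\
  (* ... with kernel exactly the image of ∂_1, so H_0(FK) ≅ A/I_n *)
  (forall f : fkvec A n, fkhom 0 f ->
     (in_gen y (fkaug f) <-> exists g, fkhom 1 g /\ fkd y p e g = f)).
Proof.
split; first by move=> f; exact: (fkdd hp).
split; first by move=> l f; exact: (fk_exact hp HK).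
split; first by move=> a; exact: fk_surj.
by move=> f; exact: (fk_H0 hp).
Qed.
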